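(* The linear span of $\{h_k:k\geq2\}$ is dense in $H^2$ with respect to the compact-open topology: for every $f\in H^2$ there is a sequence $(p_j)$ in $\mathrm{span}\{h_k:k\ge2\}$ converging to $f$ uniformly on compact subsets of $\mathbb{D}$.
   Context: $\mathbb{D}$ is the open unit disk and $H^2$ the Hardy space on $\mathbb{D}$. For $k\geq 2$, $h_k(z)=\frac{1}{1-z}\big(\mathrm{Log}(1-z^k)-\mathrm{Log}(1-z)-\ln k\big)$ with $\mathrm{Log}$ the principal branch. *)

(* Defs.v *)
From Stdlib Require Import Reals.
Open Scope R_scope.

Definition Cplx : Type := (R * R)%type.
Definition RtoC (x : R) : Cplx := (x, 0).
Definition C0 : Cplx := (0, 0).
Definition C1 : Cplx := (1, 0).
Definition Cadd (z w : Cplx) : Cplx := (fst z + fst w, snd z + snd w).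
Definition Copp (z : Cplx) : Cplx := (- fst z, - snd z).
Definition Csub (z w : Cplx) : Cplx := Cadd z (Copp w).
Definition Cmul (z w : Cplx) : Cplx :=
  (fst z * fst w - snd z * snd w, fst z * snd w + snd z * fst w).
Definition Cinv (z : Cplx) : Cplx :=
  let d := fst z * fst z + snd z * snd z in (fst z / d, - snd z / d).
Definition Cdiv (z w : Cplx) : Cplx := Cmul z (Cinv w).
Definition Cnorm (z : Cplx) : R := sqrt (fst z * fst z + snd z * snd z).
Fixpoint Cpow (z : Cplx) (n : nat) : Cplx :=
  match n with O => C1 | S m => Cmul z (Cpow z m) end.
Fixpoint Csum (f : nat -> Cplx) (n : nat) : Cplx :=
  match n with O => f O | S m => Cadd (Csum f m) (f (S m)) end.

Definition Cseq_cv (u : nat -> Cplx) (l : Cplx) : Prop :=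
  forall eps : R, eps > 0 -> exists N : nat, forall n : nat, (n >= N)%nat ->
    Cnorm (Csub (u n) l) < eps.
Definition Cseries_cv (a : nat -> Cplx) (l : Cplx) : Prop := Cseq_cv (Csum a) l.

Definition in_disk (z : Cplx) : Prop := Cnorm z < 1.

(** Principal argument, with values in (-PI, PI] (Arg 0 := 0, irrelevant). *)
Definition Arg (z : Cplx) : R :=
  let x := fst z in let y := snd z in
  if Rlt_dec 0 x then atan (y / x)
  else if Rlt_dec x 0 then
    (if Rle_dec 0 y then atan (y / x) + PI else atan (y / x) - PI)
  else (if Rlt_dec 0 y then PI / 2 else if Rlt_dec y 0 then - (PI / 2) else 0).

Definition CLog (z : Cplx) : Cplx := (ln (Cnorm z), Arg z).

Definition h (k : nat) (z : Cplx) : Cplx :=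
  Cdiv (Csub (Csub (CLog (Csub C1 (Cpow z k))) (CLog (Csub C1 z))) (RtoC (ln (INR k))))
       (Csub C1 z).

Definition in_H2 (f : Cplx -> Cplx) : Prop :=
  exists a : nat -> Cplx,
    (exists s : R, infinite_sum (fun n => Rsqr (Cnorm (a n))) s) /\
    (forall z : Cplx, in_disk z -> Cseries_cv (fun n => Cmul (a n) (Cpow z n)) (f z)).

Definition seq_compact (K : Cplx -> Prop) : Prop :=
  forall u : nat -> Cplx, (forall n, K (u n)) ->
    exists phi : nat -> nat, (forall n, (phi n < phi (S n))%nat) /\
      exists l : Cplx, K l /\ Cseq_cv (fun n => u (phi n)) l.

Definition cv_compact_open (p : nat -> Cplx -> Cplx) (f : Cplx -> Cplx) : Prop :=
  forall K : Cplx -> Prop, (forall z, K z -> in_disk z) -> seq_compact K ->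
    forall eps : R, eps > 0 -> exists N : nat, forall j : nat, (j >= N)%nat ->
      forall z : Cplx, K z -> Cnorm (Csub (p j z) (f z)) < eps.

(* Main.v *)
Require Import Defs.
From Stdlib Require Import Reals Lra Lia Psatz List Arith ZArith Bool.
From Stdlib Require Import Classical ClassicalEpsilon.
From Coquelicot Require Import Rcomplements Derive AutoDerive Hierarchy.
From Coquelicot Require Import Complex.
Require Import Defs.
Import ListNotations.

Local Close Scope R_scope.
Local Open Scope nat_scope.

Definition Aset (s m : nat) : bool := forallb (fun d => negb (m mod d =? 0)) (seq 2 s).
Definition primeb (p : nat) : bool := Aset (p - 2) p.

Lemma Aset_iff s m : Aset s m = true <-> (forall d, 2 <= d <= s + 1 -> m mod d <> 0).
Proof.
  unfold Aset. rewrite forallb_forall. split.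
  - intros H d Hd E. specialize (H d). rewrite in_seq in H. rewrite E in H. simpl in H.
    assert (false = true) by (apply H; lia). discriminate.
  - intros H d Hd. rewrite in_seq in Hd. specialize (H d ltac:(lia)).
    apply negb_true_iff. apply Nat.eqb_neq. auto.
Qed.

Lemma Aset_small s m : 2 <= m <= s + 1 -> Aset s m = false.
Proof. intro H. destruct (Aset s m) eqn:E; auto. rewrite Aset_iff in E.
  exfalso. apply (E m H). apply Nat.Div0.mod_same. Qed.

Lemma Aset_one s : Aset s 1 = true.
Proof. apply Aset_iff. intros d Hd. rewrite Nat.mod_small by lia. lia. Qed.

Lemma Aset_S s m : Aset (S s) m = Aset s m && negb (m mod (s + 2) =? 0).
Proof. unfold Aset. rewrite seq_S, forallb_app. cbn [forallb]. rewrite andb_true_r.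
  replace (2 + s) with (s + 2) by lia. reflexivity. Qed.

Lemma mod0_divide a b : b <> 0 -> a mod b = 0 <-> Nat.divide b a.
Proof. intro. apply Nat.Lcm0.mod_divide. Qed.

Lemma forallb_false {A} (f : A -> bool) l : forallb f l = false -> exists x, In x l /\ f x = false.
Proof. induction l; simpl; intro H; try discriminate.
  destruct (f a) eqn:E; simpl in H. destruct (IHl H) as [x [? ?]]. exists x; auto.
  exists a; auto. Qed.

Lemma nonprime_absorb s m : primeb (s + 2) = false -> Aset s m = true -> m mod (s + 2) <> 0.
Proof.
  intros Hp Hm E. unfold primeb in Hp. replace (s + 2 - 2) with s in Hp by lia.
  destruct (Aset s (s+2)) eqn:Q; try discriminate.
  assert (exists d, 2 <= d <= s + 1 /\ (s+2) mod d = 0).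
  { destruct (forallb (fun d => negb ((s+2) mod d =? 0)) (seq 2 s)) eqn:F.
    - unfold Aset in Q. congruence.
    - destruct (forallb_false _ _ F) as [d [Hd Hf]]. rewrite in_seq in Hd.
      apply negb_false_iff, Nat.eqb_eq in Hf. exists d. split; [lia|auto]. }
  destruct H as [d [Hd Hd2]]. rewrite Aset_iff in Hm. apply (Hm d Hd).
  apply mod0_divide; try lia. apply mod0_divide in Hd2; try lia. apply mod0_divide in E; try lia.
  eapply Nat.divide_trans; eauto.
Qed.

Lemma prime_closure s m : primeb (s + 2) = true -> Aset s ((s + 2) * m) = Aset s m.
Proof.
  intro Hp. unfold primeb in Hp. replace (s + 2 - 2) with s in Hp by lia.
  rewrite Aset_iff in Hp.
  destruct (Aset s m) eqn:E1; destruct (Aset s ((s+2)*m)) eqn:E2; auto.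
  - exfalso. rewrite Aset_iff in E1. apply Bool.not_true_iff_false in E2. apply E2.
    rewrite Aset_iff. intros d Hd Hdiv. apply (E1 d Hd).
    apply mod0_divide in Hdiv; try lia. apply mod0_divide; try lia.
    apply Nat.gauss with (m := s + 2); auto.
    set (g := Nat.gcd d (s+2)).
    assert (Hg1 : Nat.divide g d) by apply Nat.gcd_divide_l.
    assert (Hg2 : Nat.divide g (s+2)) by apply Nat.gcd_divide_r.
    assert (g <> 0). { intro G. apply Nat.gcd_eq_0 in G. lia. }
    assert (g <= d) by (apply Nat.divide_pos_le; auto; lia).
    destruct (Nat.eq_dec g 1) as [|Hn]; auto. exfalso.
    apply (Hp g ltac:(lia)). apply mod0_divide; auto.
  - exfalso. rewrite Aset_iff in E2. apply Bool.not_true_iff_false in E1. apply E1.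
    rewrite Aset_iff. intros d Hd Hdiv. apply (E2 d Hd).
    apply mod0_divide in Hdiv; try lia. apply mod0_divide; try lia.
    apply Nat.divide_mul_r. auto.
Qed.

Local Close Scope nat_scope.
Local Open Scope R_scope.

Lemma eCadd : Cadd = Cplus. Proof. reflexivity. Qed.
Lemma eCmul : Cmul = Cmult. Proof. reflexivity. Qed.
Lemma eCopp : Defs.Copp = Complex.Copp. Proof. reflexivity. Qed.
Lemma eCsub : Csub = Cminus. Proof. reflexivity. Qed.
Lemma eC1 : C1 = Complex.RtoC 1. Proof. reflexivity. Qed.
Lemma eC0 : C0 = Complex.RtoC 0. Proof. reflexivity. Qed.
Lemma eRtoC : Defs.RtoC = Complex.RtoC. Proof. reflexivity. Qed.
Lemma eCpow : Defs.Cpow = Complex.Cpow. Proof. reflexivity. Qed.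
Lemma eCinv z : Defs.Cinv z = Complex.Cinv z.
Proof. destruct z as [x y]; unfold Defs.Cinv, Complex.Cinv; simpl; f_equal; f_equal; ring. Qed.
Lemma eCdiv z w : Defs.Cdiv z w = Complex.Cdiv z w.
Proof. unfold Defs.Cdiv, Complex.Cdiv. rewrite eCinv. reflexivity. Qed.
Lemma eCnorm z : Cnorm z = Cmod z.
Proof. unfold Cnorm, Cmod. f_equal. ring. Qed.

Ltac toC := rewrite ?eCdiv, ?eCinv, ?eCsub, ?eCadd, ?eCmul, ?eCopp, ?eC1, ?eC0, ?eRtoC, ?eCpow, ?eCnorm in *.
Ltac toCeq := repeat match goal with v : Cplx |- _ => change C in v end;
  match goal with |- @eq _ ?x ?y => change (@eq C x y) end.
Ltac cring := toC; toCeq; ring.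

Lemma Cnorm_ge0 z : 0 <= Cnorm z.
Proof. unfold Cnorm; apply sqrt_pos. Qed.
Lemma Cnorm_add z w : Cnorm (Cadd z w) <= Cnorm z + Cnorm w.
Proof. toC. apply Cmod_triangle. Qed.
Lemma Cnorm_mul z w : Cnorm (Cmul z w) = Cnorm z * Cnorm w.
Proof. toC. apply Cmod_mult. Qed.
Lemma Cnorm_opp z : Cnorm (Defs.Copp z) = Cnorm z.
Proof. toC. apply Cmod_opp. Qed.
Lemma Cnorm_pow z n : Cnorm (Defs.Cpow z n) = Cnorm z ^ n.
Proof. toC. apply Cmod_pow. Qed.
Lemma Cnorm_RtoC x : Cnorm (Defs.RtoC x) = Rabs x.
Proof. toC. apply Cmod_R. Qed.
Lemma Cnorm_C1 : Cnorm C1 = 1.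
Proof. toC. apply Cmod_1. Qed.
Lemma Cnorm_sub z w : Cnorm (Csub z w) <= Cnorm z + Cnorm w.
Proof. unfold Csub. eapply Rle_trans. apply Cnorm_add. rewrite Cnorm_opp; lra. Qed.
Lemma Cnorm_sub_sym z w : Cnorm (Csub z w) = Cnorm (Csub w z).
Proof. replace (Csub w z) with (Defs.Copp (Csub z w)) by cring. symmetry; apply Cnorm_opp. Qed.
Lemma Cnorm_tri3 a b c : Cnorm (Csub a c) <= Cnorm (Csub a b) + Cnorm (Csub b c).
Proof. replace (Csub a c) with (Cadd (Csub a b) (Csub b c)). apply Cnorm_add.
 cring. Qed.
Lemma Cnorm_rev z w : Cnorm z - Cnorm w <= Cnorm (Csub z w).
Proof. pose proof (Cnorm_add (Csub z w) w). replace (Cadd (Csub z w) w) with z in H. lra. cring. Qed.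
Lemma Cnorm_fst z : Rabs (fst z) <= Cnorm z.
Proof. destruct z as [x y]. unfold Cnorm; simpl. rewrite <- sqrt_Rsqr_abs. apply sqrt_le_1_alt.
 unfold Rsqr. nra. Qed.
Lemma Cnorm_snd z : Rabs (snd z) <= Cnorm z.
Proof. destruct z as [x y]. unfold Cnorm; simpl. rewrite <- sqrt_Rsqr_abs. apply sqrt_le_1_alt.
 unfold Rsqr. nra. Qed.
Lemma Cnorm_le_abs z : Cnorm z <= Rabs (fst z) + Rabs (snd z).
Proof. destruct z as [x y]. unfold Cnorm; simpl.
 pose proof (Rabs_pos x); pose proof (Rabs_pos y).
 rewrite <- (sqrt_Rsqr (Rabs x + Rabs y)) by lra. apply sqrt_le_1_alt.
 unfold Rsqr.
 assert (x*x = Rabs x * Rabs x) by (rewrite <- Rabs_mult; rewrite Rabs_right; nra).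
 assert (y*y = Rabs y * Rabs y) by (rewrite <- Rabs_mult; rewrite Rabs_right; nra). nra. Qed.
Lemma Cnorm_eq0 z : Cnorm z = 0 -> z = C0.
Proof. intro H. pose proof (Cnorm_fst z); pose proof (Cnorm_snd z).
 destruct z as [x y]; simpl in *. rewrite H in *.
 assert (x = 0) by (pose proof (Rabs_pos x); destruct (Req_dec x 0); auto; pose proof (Rabs_no_R0 x); lra).
 assert (y = 0) by (pose proof (Rabs_pos y); destruct (Req_dec y 0); auto; pose proof (Rabs_no_R0 y); lra). subst; reflexivity. Qed.
Lemma Cnorm_C0 : Cnorm C0 = 0.
Proof. unfold Cnorm, C0; simpl. rewrite Rmult_0_l, Rplus_0_l. apply sqrt_0. Qed.
Lemma Cnorm_inv z : Cnorm z <> 0 -> Cnorm (Defs.Cinv z) = / Cnorm z.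
Proof. intro H. toC. apply Cmod_inv. intro E. apply H. rewrite E. apply Cmod_0. Qed.
Lemma Cnorm_1sub z : 1 - Cnorm z <= Cnorm (Csub C1 z).
Proof. pose proof (Cnorm_rev C1 z). rewrite Cnorm_C1 in H. lra. Qed.

Lemma Cplx_ft : field_theory C0 C1 Cadd Cmul Csub Defs.Copp Defs.Cdiv Defs.Cinv (@eq Cplx).
Proof.
  destruct C_field_theory as [[? ? ? ? ? ? ? ? ?] ? ? ?].
  constructor; [constructor|..]; toC; auto.
  all: try (intros p q; rewrite !eCdiv; auto).
  intros p Hp. rewrite (eCinv p). apply Finv_l. auto.
Qed.
Add Field Cplx_field : Cplx_ft.
Goal forall a b : Cplx, Cmul a b = Cmul b a. intros. ring. Qed.
Goal forall a b : Cplx, b <> C0 -> Cmul (Defs.Cdiv a b) b = a. intros. field. auto. Qed.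

Fixpoint cs (f : nat -> Cplx) (n : nat) : Cplx :=
  match n with O => C0 | S m => Cadd (cs f m) (f m) end.
Fixpoint rsum (f : nat -> R) (n : nat) : R :=
  match n with O => 0 | S m => rsum f m + f m end.

Lemma fst_cs f n : fst (cs f n) = rsum (fun i => fst (f i)) n.
Proof. induction n; simpl; auto. rewrite IHn; auto. Qed.
Lemma snd_cs f n : snd (cs f n) = rsum (fun i => snd (f i)) n.
Proof. induction n; simpl; auto. rewrite IHn; auto. Qed.
Lemma rsum_ext f g n : (forall i, (i < n)%nat -> f i = g i) -> rsum f n = rsum g n.
Proof. induction n; simpl; intros; auto. rewrite IHn by (intros; apply H; lia). rewrite H by lia; auto. Qed.
Lemma cs_ext f g n : (forall i, (i < n)%nat -> f i = g i) -> cs f n = cs g n.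
Proof. induction n; simpl; intros; auto. rewrite IHn by (intros; apply H; lia). rewrite H by lia; auto. Qed.

Lemma is_derive_rsum (p : nat -> R) N t :
  is_derive (fun t => rsum (fun i => t^(S i) * p i) N) t (rsum (fun i => t^i * (INR (S i) * p i)) N).
Proof.
  induction N; simpl.
  - auto_derive; auto.
  - apply (is_derive_plus (fun t => rsum (fun i => t^(S i) * p i) N) (fun t => t * t^N * p N)); auto.
    auto_derive; auto. destruct N; simpl; [ring|]. rewrite <- S_INR. ring.
Qed.

Definition LS (N : nat) (w : Cplx) : Cplx :=
  cs (fun i => Cmul (Defs.RtoC (/ INR (S i))) (Defs.Cpow w (S i))) N.

Lemma geom_cs (x : Cplx) N :
  Cmul (Csub C1 x) (cs (fun i => Defs.Cpow x i) N) = Csub C1 (Defs.Cpow x N).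
Proof.
  induction N; simpl. ring.
  replace (Cmul (Csub C1 x) (Cadd (cs (fun i => Defs.Cpow x i) N) (Defs.Cpow x N)))
   with (Cadd (Cmul (Csub C1 x) (cs (fun i => Defs.Cpow x i) N)) (Cmul (Csub C1 x) (Defs.Cpow x N))) by ring.
  rewrite IHN. ring.
Qed.

Lemma RtoC_mul a b : Defs.RtoC (a * b) = Cmul (Defs.RtoC a) (Defs.RtoC b).
Proof. unfold Defs.RtoC, Cmul; simpl; f_equal; ring. Qed.

Lemma Cpow_scal t w n : Defs.Cpow (Cmul (Defs.RtoC t) w) n = Cmul (Defs.RtoC (t ^ n)) (Defs.Cpow w n).
Proof. induction n; simpl. unfold Defs.RtoC, C1, Cmul; simpl; f_equal; ring.
  rewrite IHn, RtoC_mul. ring. Qed.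

Lemma cs_mul_l c f N : cs (fun i => Cmul c (f i)) N = Cmul c (cs f N).
Proof. induction N; simpl. ring. rewrite IHN. ring. Qed.

Definition Ef (w : Cplx) (N : nat) (t : R) : Cplx :=
  Cmul (Defs.Copp w) (Cmul (Defs.Cpow (Cmul (Defs.RtoC t) w) N)
      (Defs.Cinv (Csub C1 (Cmul (Defs.RtoC t) w)))).

Lemma key_id w N t : Csub C1 (Cmul (Defs.RtoC t) w) <> C0 ->
  Cadd (Defs.Cdiv (Defs.Copp w) (Csub C1 (Cmul (Defs.RtoC t) w)))
       (cs (fun i => Cmul (Defs.RtoC (t^i)) (Defs.Cpow w (S i))) N) = Ef w N t.
Proof.
  intro Hnz. unfold Ef. set (x := Cmul (Defs.RtoC t) w) in *.
  assert (E1 : cs (fun i => Cmul (Defs.RtoC (t^i)) (Defs.Cpow w (S i))) N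
             = Cmul w (cs (fun i => Defs.Cpow x i) N)).
  { rewrite <- cs_mul_l. apply cs_ext. intros i _. unfold x. rewrite Cpow_scal. simpl. ring. }
  rewrite E1. pose proof (geom_cs x N) as G.
  assert (G2 : cs (fun i => Defs.Cpow x i) N = Cmul (Csub C1 (Defs.Cpow x N)) (Defs.Cinv (Csub C1 x))).
  { rewrite <- G. field. auto. }
  rewrite G2. field. auto.
Qed.

Lemma rsum_zero n : rsum (fun _ => 0) n = 0.
Proof. induction n; simpl; auto. rewrite IHn; ring. Qed.

Lemma Ef_bound w N t : Cnorm w < 1 -> 0 <= t <= 1 ->
  Cnorm (Ef w N t) <= Cnorm w ^ S N / (1 - Cnorm w).
Proof.
  intros Hw Ht. set (r := Cnorm w) in *. pose proof (Cnorm_ge0 w) as Hr0. fold r in Hr0.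
  assert (Hx : Cnorm (Cmul (Defs.RtoC t) w) = t * r).
  { rewrite Cnorm_mul, Cnorm_RtoC, Rabs_right by lra. auto. }
  assert (Hd : 1 - r <= Cnorm (Csub C1 (Cmul (Defs.RtoC t) w))).
  { pose proof (Cnorm_1sub (Cmul (Defs.RtoC t) w)). rewrite Hx in H. nra. }
  unfold Ef. rewrite Cnorm_mul, Cnorm_opp, Cnorm_mul, Cnorm_pow, Hx.
  rewrite Cnorm_inv by (intro; lra). fold r.
  assert (0 <= (t*r)^N <= r^N). { split. apply pow_le; nra. apply pow_incr; nra. }
  simpl. unfold Rdiv. rewrite Rmult_assoc.
  apply Rmult_le_compat_l; auto.
  apply Rmult_le_compat; try lra. apply Rlt_le, Rinv_0_lt_compat; lra.
  apply Rinv_le_contravar; lra.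
Qed.

Lemma log_taylor w N : Cnorm w < 1 ->
  Cnorm (Cadd (CLog (Csub C1 w)) (LS N w)) <= 2 * (Cnorm w ^ S N / (1 - Cnorm w)).
Proof.
  intro Hw. set (B := Cnorm w ^ S N / (1 - Cnorm w)).
  pose proof (Cnorm_fst w) as Ha. pose proof (Cnorm_snd w) as Hb.
  pose proof (Cnorm_ge0 w) as Hr0.
  destruct w as [a b]. simpl in Ha, Hb. set (r := Cnorm (a,b)) in *.
  set (pr := fun i => fst (Defs.Cpow (a,b) (S i)) * / INR (S i)).
  set (pj := fun i => snd (Defs.Cpow (a,b) (S i)) * / INR (S i)).
  set (D := fun t => (1 - t*a)^2 + (t*b)^2).
  assert (HD : forall t, 0 <= t <= 1 -> 0 < 1 - t * a /\ 0 < D t).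
  { intros t Ht. assert (Rabs (t*a) < 1).
    { rewrite Rabs_mult, Rabs_right by lra. assert (Rabs a < 1) by lra. nra. }
    assert (0 < 1 - t*a) by (apply Rabs_def2 in H; lra). split; auto. unfold D. nra. }
  assert (HEnz : forall t, 0 <= t <= 1 -> Csub C1 (Cmul (Defs.RtoC t) (a,b)) <> C0).
  { intros t Ht E. pose proof (Cnorm_1sub (Cmul (Defs.RtoC t) (a,b))). rewrite E, Cnorm_C0 in H.
    rewrite Cnorm_mul, Cnorm_RtoC, Rabs_right in H by lra. fold r in H. nra. }
  assert (Hkey : forall t, 0 <= t <= 1 ->
     Ef (a,b) N t = Cadd (Defs.Cdiv (Defs.Copp (a,b)) (Csub C1 (Cmul (Defs.RtoC t) (a,b))))
       (cs (fun i => Cmul (Defs.RtoC (t^i)) (Defs.Cpow (a,b) (S i))) N)).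
  { intros t Ht. symmetry. apply key_id. auto. }
  set (U := fun t => ln (sqrt (D t)) + rsum (fun i => t^(S i) * pr i) N).
  assert (HU' : forall t, 0 <= t <= 1 -> is_derive U t (fst (Ef (a,b) N t))).
  { intros t Ht. destruct (HD t Ht) as [H1 H2].
    eapply is_derive_ext. intro u. reflexivity.
    replace (fst (Ef (a,b) N t)) with ((-(1-t*a)*a + t*b^2)/D t + rsum (fun i => t^i * (INR (S i) * pr i)) N).
    apply (is_derive_plus (fun t => ln (sqrt (D t)))).
    - unfold D. auto_derive. unfold D in H2. repeat split; auto; try nra. apply sqrt_lt_R0; nra.
      assert (Hs : sqrt ((1 - t * a) ^ 2 + (t * b) ^ 2) * sqrt ((1 - t * a) ^ 2 + (t * b) ^ 2) = (1 - t * a) ^ 2 + (t * b) ^ 2) by (apply sqrt_sqrt; nra).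
      assert (0 < sqrt ((1 - t * a) ^ 2 + (t * b) ^ 2)) by (apply sqrt_lt_R0; nra).
      replace ((1 + - (t * a)) * ((1 + - (t * a)) * 1) + t * b * (t * b * 1)) with ((1 - t * a) ^ 2 + (t * b) ^ 2) by ring.
      set (E := (1 - t*a)^2 + (t*b)^2) in *. set (s := sqrt E) in *. rewrite <- Hs. field. lra.
    - apply is_derive_rsum.
    - rewrite (Hkey t Ht). simpl fst. rewrite fst_cs. f_equal.
      + unfold Defs.Cdiv, Cmul, Defs.Cinv, Csub, Cadd, Defs.Copp, Defs.RtoC, C1, D; simpl. unfold D in H2. field. nra.
      + apply rsum_ext. intros i _. unfold pr. change (Cmul (a,b) (Defs.Cpow (a,b) i)) with (Defs.Cpow (a,b) (S i)). change (Cmul (a,b) (Defs.Cpow (a,b) i)) with (Defs.Cpow (a,b) (S i)). set (z := Defs.Cpow (a,b) (S i)). unfold Cmul, Defs.RtoC; cbn [fst snd]. field; try (apply not_0_INR; lia). }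
  assert (HU0 : U 0 = 0).
  { unfold U, D. replace ((1 - 0*a)^2 + (0*b)^2) with 1 by ring. rewrite sqrt_1, ln_1.
    rewrite (rsum_ext _ (fun _ => 0)). rewrite rsum_zero; ring. intros; simpl; ring. }
  assert (HU1 : U 1 = fst (Cadd (CLog (Csub C1 (a,b))) (LS N (a,b)))).
  { unfold U, LS. simpl fst. rewrite fst_cs. f_equal.
    - unfold Cnorm, D. simpl. f_equal. f_equal. ring.
    - apply rsum_ext. intros i _. unfold pr. change (Cmul (a,b) (Defs.Cpow (a,b) i)) with (Defs.Cpow (a,b) (S i)). set (z := Defs.Cpow (a,b) (S i)). unfold Cmul, Defs.RtoC; cbn [fst snd]. rewrite pow1. change (match i with 0%nat => 1 | S _ => INR i + 1 end) with (INR (S i)). ring. }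
  destruct (MVT_abs U (fun t => fst (Ef (a,b) N t)) 0 1) as [c [Hc1 Hc2]].
  { intros c Hc. rewrite Rmin_left, Rmax_right in Hc by lra. apply is_derive_Reals. auto. }
  rewrite Rmin_left, Rmax_right in Hc2 by lra.
  set (V := fun t => atan (-(t*b)/(1-t*a)) + rsum (fun i => t^(S i) * pj i) N).
  assert (HV' : forall t, 0 <= t <= 1 -> is_derive V t (snd (Ef (a,b) N t))).
  { intros t Ht. destruct (HD t Ht) as [H1 H2].
    replace (snd (Ef (a,b) N t)) with (-b/D t + rsum (fun i => t^i * (INR (S i) * pj i)) N).
    apply (is_derive_plus (fun t => atan (-(t*b)/(1-t*a)))).
    - auto_derive. lra. unfold D in *. field. split. lra. nra.
    - apply is_derive_rsum.
    - rewrite (Hkey t Ht). simpl snd. rewrite snd_cs. f_equal.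
      + unfold Defs.Cdiv, Cmul, Defs.Cinv, Csub, Cadd, Defs.Copp, Defs.RtoC, C1, D; simpl. unfold D in H2. field. nra.
      + apply rsum_ext. intros i _. unfold pj. change (Cmul (a,b) (Defs.Cpow (a,b) i)) with (Defs.Cpow (a,b) (S i)). set (z := Defs.Cpow (a,b) (S i)). unfold Cmul, Defs.RtoC; cbn [fst snd]. field; try (apply not_0_INR; lia). }
  assert (HV0 : V 0 = 0).
  { unfold V. replace (-(0*b)/(1-0*a)) with 0 by (field; lra). rewrite atan_0.
    rewrite (rsum_ext _ (fun _ => 0)). rewrite rsum_zero; ring. intros; simpl; ring. }
  assert (HV1 : V 1 = snd (Cadd (CLog (Csub C1 (a,b))) (LS N (a,b)))).
  { unfold V, LS. simpl snd. rewrite snd_cs. f_equal.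
    - unfold Arg. simpl. destruct (Rlt_dec 0 (1 + - a)) as [h|h]; [|exfalso; destruct (HD 1); lra].
      f_equal. field. lra.
    - apply rsum_ext. intros i _. unfold pj. change (Cmul (a,b) (Defs.Cpow (a,b) i)) with (Defs.Cpow (a,b) (S i)). set (z := Defs.Cpow (a,b) (S i)). unfold Cmul, Defs.RtoC; cbn [fst snd]. rewrite pow1. change (match i with 0%nat => 1 | S _ => INR i + 1 end) with (INR (S i)). ring. }
  destruct (MVT_abs V (fun t => snd (Ef (a,b) N t)) 0 1) as [d [Hd1 Hd2]].
  { intros c' Hc. rewrite Rmin_left, Rmax_right in Hc by lra. apply is_derive_Reals. auto. }
  rewrite Rmin_left, Rmax_right in Hd2 by lra.
  eapply Rle_trans. apply Cnorm_le_abs.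
  rewrite <- HU1, <- HV1.
  replace (U 1) with (U 1 - U 0) by (rewrite HU0; ring).
  replace (V 1) with (V 1 - V 0) by (rewrite HV0; ring).
  rewrite Hc1, Hd1. replace (1 - 0) with 1 by ring. rewrite Rabs_R1, !Rmult_1_r.
  pose proof (Cnorm_fst (Ef (a,b) N c)). pose proof (Cnorm_snd (Ef (a,b) N d)).
  pose proof (Ef_bound (a,b) N c Hw Hc2). pose proof (Ef_bound (a,b) N d Hw Hd2).
  unfold B. change (Cnorm (a,b)) with r in H1, H2. lra.
Qed.

Definition L (k : nat) (z : Cplx) : Cplx := CLog (Csub C1 (Defs.Cpow z k)).

Lemma Cpow_add z a b : Defs.Cpow z (a + b) = Cmul (Defs.Cpow z a) (Defs.Cpow z b).
Proof. induction a; simpl. ring. rewrite IHa. ring. Qed.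
Lemma Cpow_mul z p k : Defs.Cpow (Defs.Cpow z p) k = Defs.Cpow z (p * k).
Proof. induction k; simpl. rewrite Nat.mul_0_r. reflexivity.
  rewrite IHk. replace (p * S k)%nat with (p + p * k)%nat by lia. rewrite Cpow_add. ring. Qed.
Lemma Cpow_1 z : Defs.Cpow z 1 = z.
Proof. simpl. ring. Qed.

Lemma pow_le_pow_small (x : R) (a b : nat) : 0 <= x <= 1 -> (a <= b)%nat -> x ^ b <= x ^ a.
Proof. intros Hx Hab. replace b with (a + (b - a))%nat by lia. rewrite pow_add.
  assert (0 <= x ^ a) by (apply pow_le; lra).
  assert (x ^ (b - a) <= 1) by (rewrite <- (pow1 (b - a)); apply pow_incr; lra). assert (0 <= x^(b-a)) by (apply pow_le; lra). nra. Qed.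

Lemma L_bound k z r : (1 <= k)%nat -> 0 <= r < 1 -> Cnorm z <= r -> Cnorm (L k z) <= 2 * r ^ k / (1 - r).
Proof.
  intros Hk Hr Hz. unfold L. set (w := Defs.Cpow z k).
  assert (Hw : Cnorm w <= r ^ k). { unfold w. rewrite Cnorm_pow. apply pow_incr. split; auto. apply Cnorm_ge0. }
  assert (r ^ k <= r). { rewrite <- (pow_1 r) at 2. apply pow_le_pow_small; lia || lra. }
  pose proof (log_taylor w 0 ltac:(lra)) as T.
  replace (Cadd (CLog (Csub C1 w)) (LS 0 w)) with (CLog (Csub C1 w)) in T by (unfold LS; simpl; ring).
  eapply Rle_trans. apply T. simpl. rewrite Rmult_1_r.
  pose proof (Cnorm_ge0 w). unfold Rdiv. rewrite <- Rmult_assoc.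
  apply Rmult_le_compat; try lra. apply Rlt_le, Rinv_0_lt_compat; lra.
  apply Rinv_le_contravar; lra.
Qed.

Fixpoint Wsum (l : list (Cplx * nat)) (z : Cplx) : Cplx :=
  match l with [] => C0 | ck :: l' => Cadd (Cmul (fst ck) (L (snd ck) z)) (Wsum l' z) end.

Lemma Wsum_app l1 l2 z : Wsum (l1 ++ l2) z = Cadd (Wsum l1 z) (Wsum l2 z).
Proof. induction l1; simpl. ring. rewrite IHl1. ring. Qed.

Lemma Wsum_sub c p l z :
  Wsum (map (fun ck => (Cmul c (fst ck), (snd ck * p)%nat)) l) z = Cmul c (Wsum l (Defs.Cpow z p)).
Proof. induction l; simpl. ring. rewrite IHl. unfold L. rewrite Cpow_mul.
  replace (p * snd a)%nat with (snd a * p)%nat by lia. ring. Qed.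

Lemma Wsum_scale c l z : Wsum (map (fun ck => (Cmul c (fst ck), snd ck)) l) z = Cmul c (Wsum l z).
Proof. induction l; simpl. ring. rewrite IHl. ring. Qed.

Fixpoint lst (s : nat) : list (Cplx * nat) :=
  match s with
  | O => [(Defs.Copp C1, 1%nat)]
  | S s' => if primeb (s' + 2) then
              lst s' ++ map (fun ck => (Cmul (Defs.RtoC (- / INR (s' + 2))) (fst ck), (snd ck * (s' + 2))%nat)) (lst s')
            else lst s'
  end.

Lemma lst_pos s : forall ck, In ck (lst s) -> (1 <= snd ck)%nat.
Proof. induction s; simpl; intros ck H.
  - destruct H as [<-|[]]. simpl; lia.
  - destruct (primeb (s+2)); auto. apply in_app_or in H. destruct H; auto.
    apply in_map_iff in H. destruct H as [x [<- Hx]]. simpl. specialize (IHs x Hx). nia.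
Qed.

Definition term (A : nat -> bool) (z : Cplx) (i : nat) : Cplx :=
  if A (S i) then Cmul (Defs.RtoC (/ INR (S i))) (Defs.Cpow z (S i)) else C0.
Definition Spart A N z := cs (term A z) N.

Lemma RtoC_inv x : x <> 0 -> Defs.RtoC (/ x) = Defs.Cinv (Defs.RtoC x).
Proof. intro. unfold Defs.RtoC, Defs.Cinv; simpl. f_equal; field; auto. Qed.
Lemma RtoC_nz x : x <> 0 -> Defs.RtoC x <> C0.
Proof. intros H E. inversion E. auto. Qed.

Lemma div_step p N : (1 <= p)%nat ->
  ((S N mod p = 0 /\ S N / p = S (N / p) /\ S N = p * S (N / p))
  \/ (S N mod p <> 0 /\ S N / p = N / p))%nat.
Proof.
  intro Hp. pose proof (Nat.div_mod_eq N p) as E. pose proof (Nat.mod_bound_pos N p ltac:(lia) ltac:(lia)).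
  set (q := (N / p)%nat) in *. set (r0 := (N mod p)%nat) in *.
  destruct (Nat.eq_dec (S r0) p).
  - left. assert (S N = p * S q + 0)%nat by lia. clearbody q r0.
    split. symmetry. apply (Nat.mod_unique _ _ (S q)); lia.
    split. symmetry. apply (Nat.div_unique _ _ _ 0); lia. lia.
  - right. assert (S N = p * q + S r0)%nat by lia. clearbody q r0.
    split. rewrite <- (Nat.mod_unique _ _ q (S r0)); lia.
    symmetry. apply (Nat.div_unique _ _ _ (S r0)); lia.
Qed.

Lemma term_A' (A : nat -> bool) p z N :
  term (fun m => andb (A m) (negb (m mod p =? 0)%nat)) z N = if (S N mod p =? 0)%nat then C0 else term A z N.
Proof. unfold term. destruct (S N mod p =? 0)%nat; simpl; destruct (A (S N)); auto. Qed.

Lemma sieve_id (A : nat -> bool) (p : nat) z : (1 <= p)%nat ->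
  (forall m, A (p * m)%nat = A m) ->
  forall N, Spart (fun m => andb (A m) (negb (m mod p =? 0)%nat)) N z
    = Csub (Spart A N z) (Cmul (Defs.RtoC (/ INR p)) (Spart A (N / p) (Defs.Cpow z p))).
Proof.
  intros Hp HA N. assert (INR p <> 0) by (apply not_0_INR; lia).
  induction N.
  - unfold Spart. rewrite Nat.Div0.div_0_l. simpl. ring.
  - unfold Spart in *. cbn [cs]. rewrite IHN, term_A'.
    destruct (div_step p N Hp) as [[H1 [H2 H3]]|[H1 H2]].
    + rewrite H2, H1. cbn [cs Nat.eqb]. unfold term.
      rewrite H3 at 1. rewrite HA.
      destruct (A (S (N / p))).
      * rewrite H3. rewrite <- Cpow_mul. rewrite mult_INR.
        assert (INR (S (N / p)) <> 0) by (apply not_0_INR; lia).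
        rewrite (RtoC_inv (INR p * INR (S (N/p)))), (RtoC_inv (INR p)), (RtoC_inv (INR (S (N/p)))), RtoC_mul;
          try (apply Rmult_integral_contrapositive; split); auto.
        field. split; apply RtoC_nz; auto.
      * ring.
    + rewrite H2. apply Nat.eqb_neq in H1. rewrite H1. ring.
Qed.

Lemma Spart_ext A B N z : (forall m, (1 <= m)%nat -> A m = B m) -> Spart A N z = Spart B N z.
Proof. intro H. unfold Spart. apply cs_ext. intros i _. unfold term. rewrite H by lia. auto. Qed.

Lemma RtoC_opp x : Defs.RtoC (- x) = Defs.Copp (Defs.RtoC x).
Proof. unfold Defs.RtoC, Defs.Copp; simpl. f_equal. ring. Qed.

Lemma pow_small r d : 0 <= r < 1 -> 0 < d -> exists N, forall n, (N <= n)%nat -> r ^ n <= d.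
Proof. intros Hr Hd. destruct (pow_lt_1_zero r ltac:(rewrite Rabs_right; lra) d Hd) as [N HN].
  exists N. intros n Hn. specialize (HN n Hn). rewrite Rabs_right in HN. lra. apply Rle_ge, pow_le; lra. Qed.

Lemma SER r : 0 <= r < 1 -> forall s, exists C, 0 <= C /\ forall N z, Cnorm z <= r ->
  Cnorm (Csub (Wsum (lst s) z) (Spart (Aset s) N z)) <= C * Cnorm z ^ S N.
Proof.
  intros Hr s. induction s.
  - exists (2 / (1 - r)). split. apply Rlt_le, Rdiv_lt_0_compat; lra.
    intros N z Hz. simpl lst. cbn [Wsum fst snd]. unfold L. rewrite Cpow_1.
    replace (Spart (Aset 0) N z) with (LS N z).
    2:{ unfold Spart, LS. apply cs_ext. intros i _. unfold term. reflexivity. }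
    replace (Csub (Cadd (Cmul (Defs.Copp C1) (CLog (Csub C1 z))) C0) (LS N z))
      with (Defs.Copp (Cadd (CLog (Csub C1 z)) (LS N z))) by ring.
    rewrite Cnorm_opp. eapply Rle_trans. apply log_taylor. lra.
    pose proof (Cnorm_ge0 z). assert (0 <= Cnorm z ^ S N) by (apply pow_le; lra).
    assert (/ (1 - Cnorm z) <= / (1 - r)) by (apply Rinv_le_contravar; lra).
    unfold Rdiv. nra.
  - destruct IHs as [C [HC0 HC]].
    simpl lst. destruct (primeb (s + 2)) eqn:Hp.
    + exists (2 * C). split. lra. intros N z Hz.
      rewrite Wsum_app, Wsum_sub.
      rewrite (Spart_ext (Aset (S s)) (fun m => andb (Aset s m) (negb (m mod (s+2) =? 0)%nat))).
      2:{ intros m _. apply Aset_S. }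
      rewrite sieve_id; [| lia | intro m; apply prime_closure; auto].
      set (p := (s + 2)%nat) in *.
      set (W1 := Wsum (lst s) z). set (W2 := Wsum (lst s) (Defs.Cpow z p)).
      set (S1 := Spart (Aset s) N z). set (S2 := Spart (Aset s) (N / p) (Defs.Cpow z p)).
      rewrite RtoC_opp.
      replace (Csub (Cadd W1 (Cmul (Defs.Copp (Defs.RtoC (/ INR p))) W2))
          (Csub S1 (Cmul (Defs.RtoC (/ INR p)) S2)))
        with (Cadd (Csub W1 S1) (Cmul (Defs.Copp (Defs.RtoC (/ INR p))) (Csub W2 S2))) by ring.
      eapply Rle_trans. apply Cnorm_add.
      rewrite Cnorm_mul, Cnorm_opp, Cnorm_RtoC.
      assert (Hp1 : 1 <= INR p) by (apply (le_INR 1); lia).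
      assert (Hip : 0 <= / INR p <= 1).
      { split. apply Rlt_le, Rinv_0_lt_compat; lra. rewrite <- Rinv_1. apply Rinv_le_contravar; lra. }
      rewrite Rabs_right by lra.
      pose proof (Cnorm_ge0 z) as Hz0.
      assert (Hzp : Cnorm (Defs.Cpow z p) <= r).
      { rewrite Cnorm_pow. eapply Rle_trans; [|exact Hz]. rewrite <- (pow_1 (Cnorm z)) at 2.
        apply pow_le_pow_small; [lra|lia]. }
      pose proof (HC N z Hz) as HC1. pose proof (HC (N / p)%nat (Defs.Cpow z p) Hzp) as HC2.
      fold W1 S1 in HC1. fold W2 S2 in HC2.
      rewrite Cnorm_pow, <- pow_mult in HC2.
      assert (Hle : (S N <= p * S (N / p))%nat).
      { pose proof (Nat.div_mod_eq N p). pose proof (Nat.mod_bound_pos N p ltac:(lia) ltac:(lia)). nia. }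
      assert (Cnorm z ^ (p * S (N / p)) <= Cnorm z ^ S N) by (apply pow_le_pow_small; [lra|lia]).
      assert (0 <= Cnorm (Csub W2 S2)) by apply Cnorm_ge0.
      assert (0 <= Cnorm z ^ (p * S (N / p))) by (apply pow_le; lra).
      assert (/ INR p * Cnorm (Csub W2 S2) <= Cnorm (Csub W2 S2)) by nra.
      nra.
    + exists C. split; auto. intros N z Hz.
      rewrite (Spart_ext (Aset (S s)) (Aset s)). apply HC; auto.
      intros m _. rewrite Aset_S. destruct (Aset s m) eqn:E; auto.
      pose proof (nonprime_absorb s m Hp E). apply Nat.eqb_neq in H. rewrite H. auto.
Qed.

Lemma cs_S f n : cs f (S n) = Cadd (cs f n) (f n).
Proof. reflexivity. Qed.

Lemma Spart_init s z : forall j, (1 <= j <= s + 1)%nat -> Spart (Aset s) j z = z.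
Proof.
  intros j. induction j; intros Hj. lia.
  destruct j.
  - unfold Spart; simpl. unfold term. rewrite Aset_one. replace (/ INR 1) with 1 by (simpl; field).
    unfold Defs.RtoC, Cmul, Cadd, C0, C1; destruct z; simpl; f_equal; ring.
  - unfold Spart in *. rewrite cs_S, IHj by lia. unfold term. rewrite Aset_small by lia. ring.
Qed.

Lemma term_bound A z i r : Cnorm z <= r -> Cnorm (term A z i) <= r ^ S i.
Proof. intro Hz. pose proof (Cnorm_ge0 z). unfold term. destruct (A (S i)).
  - rewrite Cnorm_mul, Cnorm_RtoC, Cnorm_pow.
    assert (1 <= INR (S i)) by (apply (le_INR 1); lia).
    assert (0 < / INR (S i) <= 1). { split. apply Rinv_0_lt_compat; lra. rewrite <- Rinv_1. apply Rinv_le_contravar; lra. }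
    rewrite Rabs_right by lra. assert (Cnorm z ^ S i <= r ^ S i) by (apply pow_incr; lra).
    assert (0 <= Cnorm z ^ S i) by (apply pow_le; lra). nra.
  - rewrite Cnorm_C0. apply pow_le. lra.
Qed.

Lemma Spart_tail s z r : 0 <= r < 1 -> Cnorm z <= r -> forall k,
  Cnorm (Csub (Spart (Aset s) (s + 1 + k) z) z) <= (r ^ (s + 2) - r ^ (s + 2 + k)) / (1 - r).
Proof.
  intros Hr Hz k. induction k.
  - rewrite Nat.add_0_r, Spart_init by lia. replace (Csub z z) with C0 by ring. rewrite Cnorm_C0.
    replace (r ^ (s+2) - r^(s+2+0)) with 0 by (rewrite Nat.add_0_r; ring). unfold Rdiv; lra.
  - replace (s + 1 + S k)%nat with (S (s + 1 + k)) by lia. unfold Spart in *. cbn [cs].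
    replace (Csub (Cadd (cs (term (Aset s) z) (s + 1 + k)) (term (Aset s) z (s + 1 + k))) z)
      with (Cadd (Csub (cs (term (Aset s) z) (s + 1 + k)) z) (term (Aset s) z (s + 1 + k))) by ring.
    eapply Rle_trans. apply Cnorm_add. pose proof (term_bound (Aset s) z (s+1+k) r Hz).
    replace (S (s + 1 + k)) with (s + 2 + k)%nat in H by lia.
    replace (s + 2 + S k)%nat with (S (s + 2 + k)) by lia. simpl pow.
    assert (r ^ (s + 2 + k) = (r ^ (s + 2 + k) - r * r ^ (s + 2 + k)) / (1 - r)) by (field; lra).
    unfold Rdiv in *. lra.
Qed.

Lemma W_approx_z r eps : 0 <= r < 1 -> 0 < eps -> exists l, (forall ck, In ck l -> (1 <= snd ck)%nat) /\
  forall z, Cnorm z <= r -> Cnorm (Csub (Wsum l z) z) <= eps.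
Proof.
  intros Hr He.
  destruct (pow_small r (eps / 2 * (1 - r)) Hr) as [s0 Hs0]. apply Rmult_lt_0_compat; lra.
  set (s := s0). destruct (SER r Hr s) as [C [HC0 HC]].
  destruct (pow_small r (eps / 2 / (C + 1)) Hr) as [N0 HN0]. apply Rdiv_lt_0_compat; lra.
  exists (lst s). split. apply lst_pos. intros z Hz.
  set (N := (s + 1 + N0)%nat).
  eapply Rle_trans. apply (Cnorm_tri3 _ (Spart (Aset s) N z)).
  pose proof (HC N z Hz). pose proof (Spart_tail s z r Hr Hz N0). fold N in H0.
  pose proof (Cnorm_ge0 z).
  assert (Cnorm z ^ S N <= r ^ S N) by (apply pow_incr; lra).
  assert (r ^ S N <= eps / 2 / (C + 1)) by (apply HN0; unfold N; lia).
  assert (r ^ (s + 2) <= eps / 2 * (1 - r)) by (apply Hs0; unfold s; lia).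
  assert (0 <= r ^ (s + 2 + N0)) by (apply pow_le; lra).
  assert ((r ^ (s + 2) - r ^ (s + 2 + N0)) / (1 - r) <= eps / 2).
  { apply (Rmult_le_reg_r (1 - r)). lra. unfold Rdiv. rewrite Rmult_assoc, Rinv_l by lra. lra. }
  assert (C * Cnorm z ^ S N <= eps / 2).
  { assert (C * Cnorm z ^ S N <= C * (eps / 2 / (C + 1))).
    { apply Rmult_le_compat_l; lra. }
    assert (C * (eps / 2 / (C + 1)) <= eps / 2).
    { unfold Rdiv. rewrite <- Rmult_assoc. apply (Rmult_le_reg_r (C + 1)). lra.
      rewrite Rmult_assoc, Rinv_l by lra. nra. }
    lra. }
  lra.
Qed.

Definition g (k : nat) (z : Cplx) : Cplx :=
  Csub (Csub (CLog (Csub C1 (Defs.Cpow z k))) (CLog (Csub C1 z))) (Defs.RtoC (ln (INR k))).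

Lemma h_g k z : h k z = Defs.Cdiv (g k z) (Csub C1 z).
Proof. reflexivity. Qed.

Fixpoint Vsum (l : list (Cplx * nat)) (z : Cplx) : Cplx :=
  match l with [] => C0 | ck :: l' => Cadd (Cmul (fst ck) (g (snd ck) z)) (Vsum l' z) end.
Definition Vok (l : list (Cplx * nat)) := forall ck, In ck l -> (2 <= snd ck)%nat.

Lemma Vsum_app l1 l2 z : Vsum (l1 ++ l2) z = Cadd (Vsum l1 z) (Vsum l2 z).
Proof. induction l1; simpl. ring. rewrite IHl1. ring. Qed.
Lemma Vsum_scale c l z : Vsum (map (fun ck => (Cmul c (fst ck), snd ck)) l) z = Cmul c (Vsum l z).
Proof. induction l; simpl. ring. rewrite IHl. ring. Qed.
Lemma Vok_app l1 l2 : Vok l1 -> Vok l2 -> Vok (l1 ++ l2).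
Proof. unfold Vok. intros H1 H2 ck H. apply in_app_or in H. destruct H; auto. Qed.
Lemma Vok_scale c l : Vok l -> Vok (map (fun ck => (Cmul c (fst ck), snd ck)) l).
Proof. unfold Vok. intros H ck Hc. apply in_map_iff in Hc. destruct Hc as [x [<- Hx]]. simpl. auto. Qed.

Definition approx (r : R) (F : Cplx -> Cplx) : Prop :=
  forall eps, 0 < eps -> exists l, Vok l /\ forall z, Cnorm z <= r -> Cnorm (Csub (Vsum l z) (F z)) <= eps.


Lemma approx_add r F G : approx r F -> approx r G -> approx r (fun z => Cadd (F z) (G z)).
Proof.
  intros HF HG eps He. destruct (HF (eps/2) ltac:(lra)) as [l1 [V1 H1]].
  destruct (HG (eps/2) ltac:(lra)) as [l2 [V2 H2]].
  exists (l1 ++ l2). split. apply Vok_app; auto. intros z Hz. rewrite Vsum_app.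
  replace (Csub (Cadd (Vsum l1 z) (Vsum l2 z)) (Cadd (F z) (G z)))
    with (Cadd (Csub (Vsum l1 z) (F z)) (Csub (Vsum l2 z) (G z))) by ring.
  eapply Rle_trans. apply Cnorm_add. specialize (H1 z Hz). specialize (H2 z Hz). lra.
Qed.

Lemma approx_scale r c F : approx r F -> approx r (fun z => Cmul c (F z)).
Proof.
  intros HF eps He. pose proof (Cnorm_ge0 c) as Hc0.
  destruct (HF (eps / (Cnorm c + 1))) as [l [V H]]. apply Rdiv_lt_0_compat; lra.
  exists (map (fun ck => (Cmul c (fst ck), snd ck)) l). split. apply Vok_scale; auto.
  intros z Hz. rewrite Vsum_scale.
  replace (Csub (Cmul c (Vsum l z)) (Cmul c (F z))) with (Cmul c (Csub (Vsum l z) (F z))) by ring.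
  rewrite Cnorm_mul. specialize (H z Hz). pose proof (Cnorm_ge0 (Csub (Vsum l z) (F z))).
  assert (Cnorm c * Cnorm (Csub (Vsum l z) (F z)) <= Cnorm c * (eps / (Cnorm c + 1))) by (apply Rmult_le_compat_l; lra).
  assert (Cnorm c * (eps / (Cnorm c + 1)) <= eps).
  { unfold Rdiv. apply (Rmult_le_reg_r (Cnorm c + 1)). lra. rewrite Rmult_assoc, Rmult_assoc, Rinv_l by lra. nra. }
  lra.
Qed.

Lemma approx_lim r F : (forall eps, 0 < eps -> exists G, approx r G /\ forall z, Cnorm z <= r -> Cnorm (Csub (G z) (F z)) <= eps) -> approx r F.
Proof.
  intros H eps He. destruct (H (eps/2) ltac:(lra)) as [G [HG HGF]].
  destruct (HG (eps/2) ltac:(lra)) as [l [V Hl]]. exists l. split; auto.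
  intros z Hz. eapply Rle_trans. apply (Cnorm_tri3 _ (G z)). specialize (Hl z Hz). specialize (HGF z Hz). lra.
Qed.

Lemma approx_ext r F G : approx r F -> (forall z, Cnorm z <= r -> F z = G z) -> approx r G.
Proof. intros HF E eps He. destruct (HF eps He) as [l [V H]]. exists l. split; auto.
  intros z Hz. rewrite <- E by auto. auto. Qed.

Lemma approx_V r l : Vok l -> approx r (Vsum l).
Proof. intros V eps He. exists l. split; auto. intros z _. replace (Csub (Vsum l z) (Vsum l z)) with C0 by ring.
  rewrite Cnorm_C0. lra. Qed.

Lemma ln2_pos : 0 < ln 2.
Proof. rewrite <- ln_1. apply ln_increasing; lra. Qed.

Lemma approx_one r : 0 <= r < 1 -> approx r (fun _ => C1).
Proof.
  intros Hr. apply approx_lim. intros eps He.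
  destruct (pow_small r (eps * ln 2 * (1 - r) / 4) Hr) as [K0 HK]. 
  { pose proof ln2_pos. apply Rdiv_lt_0_compat; [|lra]. apply Rmult_lt_0_compat; [|lra]. apply Rmult_lt_0_compat; lra. }
  set (K := (K0 + 2)%nat). set (c := Defs.RtoC (/ ln 2)).
  exists (Vsum [(c, K); (Defs.Copp c, (2 * K)%nat)]). split.
  { apply approx_V. intros ck [<-|[<-|[]]]; simpl; unfold K; lia. }
  intros z Hz. cbn [Vsum fst snd]. unfold g.
  assert (E : Defs.RtoC (ln (INR (2 * K))) = Cadd (Defs.RtoC (ln 2)) (Defs.RtoC (ln (INR K)))).
  { rewrite mult_INR. rewrite ln_mult. unfold Defs.RtoC, Cadd; simpl; f_equal; ring. simpl; lra.
    apply lt_0_INR. unfold K; lia. }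
  rewrite E.
  assert (E2 : Cmul c (Defs.RtoC (ln 2)) = C1).
  { unfold c. rewrite <- RtoC_mul. rewrite Rinv_l. reflexivity. pose proof ln2_pos; lra. }
  replace (Csub (Cadd (Cmul c (Csub (Csub (CLog (Csub C1 (Defs.Cpow z K))) (CLog (Csub C1 z))) (Defs.RtoC (ln (INR K)))))
     (Cadd (Cmul (Defs.Copp c) (Csub (Csub (CLog (Csub C1 (Defs.Cpow z (2 * K)))) (CLog (Csub C1 z)))
        (Cadd (Defs.RtoC (ln 2)) (Defs.RtoC (ln (INR K)))))) C0)) C1)
    with (Cadd (Cmul c (Csub (L K z) (L (2*K) z))) (Csub (Cmul c (Defs.RtoC (ln 2))) C1)) by (unfold L; ring).
  rewrite E2. replace (Csub C1 C1) with C0 by ring.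
  replace (Cadd (Cmul c (Csub (L K z) (L (2 * K) z))) C0) with (Cmul c (Csub (L K z) (L (2 * K) z))) by ring.
  rewrite Cnorm_mul. unfold c. rewrite Cnorm_RtoC. pose proof ln2_pos.
  rewrite Rabs_right by (apply Rle_ge, Rlt_le, Rinv_0_lt_compat; lra).
  assert (HK1 : (1 <= K)%nat) by (unfold K; lia).
  pose proof (L_bound K z r HK1 Hr Hz). pose proof (L_bound (2*K) z r ltac:(lia) Hr Hz).
  assert (r ^ (2 * K) <= r ^ K) by (apply pow_le_pow_small; [lra|lia]).
  assert (r ^ K <= eps * ln 2 * (1 - r) / 4) by (apply HK; unfold K; lia).
  pose proof (Cnorm_sub (L K z) (L (2*K) z)).
  assert (Cnorm (Csub (L K z) (L (2 * K) z)) <= eps * ln 2).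
  { assert (2 * r ^ K / (1 - r) <= eps * ln 2 / 2).
    { apply (Rmult_le_reg_r (1 - r)). lra. unfold Rdiv. rewrite Rmult_assoc, Rinv_l by lra. lra. }
    assert (2 * r ^ (2*K) / (1 - r) <= 2 * r ^ K / (1 - r)).
    { unfold Rdiv. apply Rmult_le_compat_r. apply Rlt_le, Rinv_0_lt_compat; lra. lra. }
    lra. }
  apply (Rmult_le_reg_l (ln 2)). auto. rewrite <- Rmult_assoc, Rinv_r by lra. lra.
Qed.

Lemma approx_const r c : 0 <= r < 1 -> approx r (fun _ => c).
Proof. intro Hr. eapply approx_ext. apply (approx_scale r c _ (approx_one r Hr)). intros; simpl; ring. Qed.

Lemma approx_L1 r : 0 <= r < 1 -> approx r (fun z => CLog (Csub C1 z)).
Proof.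
  intro Hr. apply approx_lim. intros eps He.
  destruct (pow_small r (eps * (1 - r) / 2) Hr) as [K0 HK]. apply Rdiv_lt_0_compat; nra.
  set (K := (K0 + 2)%nat).
  exists (fun z => Cadd (Cmul (Defs.Copp C1) (Vsum [(C1, K)] z)) (Defs.RtoC (- ln (INR K)))). split.
  { apply approx_add. apply approx_scale. apply approx_V. intros ck [<-|[]]; simpl; unfold K; lia.
    apply approx_const; auto. }
  intros z Hz. cbn [Vsum fst snd]. unfold g. rewrite RtoC_opp.
  replace (Csub (Cadd (Cmul (Defs.Copp C1) (Cadd (Cmul C1 (Csub (Csub (CLog (Csub C1 (Defs.Cpow z K))) (CLog (Csub C1 z))) (Defs.RtoC (ln (INR K))))) C0)) (Defs.Copp (Defs.RtoC (ln (INR K))))) (CLog (Csub C1 z)))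
    with (Defs.Copp (L K z)) by (unfold L; ring).
  rewrite Cnorm_opp. pose proof (L_bound K z r ltac:(unfold K; lia) Hr Hz).
  assert (r ^ K <= eps * (1 - r) / 2) by (apply HK; unfold K; lia).
  assert (2 * r ^ K / (1 - r) <= eps).
  { apply (Rmult_le_reg_r (1 - r)). lra. unfold Rdiv in *. rewrite Rmult_assoc, Rinv_l by lra. lra. }
  lra.
Qed.

Lemma approx_L r k : 0 <= r < 1 -> (1 <= k)%nat -> approx r (L k).
Proof.
  intros Hr Hk. destruct (Nat.eq_dec k 1) as [->|Hk2].
  - eapply approx_ext. apply approx_L1; auto. intros z _. unfold L. rewrite Cpow_1. auto.
  - eapply approx_ext.
    apply (approx_add r (fun z => Vsum [(C1, k)] z) (fun z => Cadd (CLog (Csub C1 z)) (Defs.RtoC (ln (INR k))))).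
    apply approx_V. intros ck [<-|[]]; simpl; lia.
    apply approx_add. apply approx_L1; auto. apply approx_const; auto.
    intros z _. cbn [Vsum fst snd]. unfold g, L. ring.
Qed.

Lemma approx_Wsum r l : 0 <= r < 1 -> (forall ck, In ck l -> (1 <= snd ck)%nat) -> approx r (Wsum l).
Proof.
  intros Hr. induction l; intro Hl.
  - eapply approx_ext. apply (approx_const r C0 Hr). intros; reflexivity.
  - simpl. apply approx_add. apply approx_scale. apply approx_L; auto. apply Hl; simpl; auto.
    apply IHl. intros; apply Hl; simpl; auto.
Qed.

Lemma approx_pow r m : 0 <= r < 1 -> approx r (fun z => Defs.Cpow z m).
Proof.
  intros Hr. destruct m.
  - eapply approx_ext. apply (approx_one r Hr). intros; reflexivity.
  - apply approx_lim. intros eps He. destruct (W_approx_z r eps Hr He) as [l [Hl H]].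
    exists (Wsum (map (fun ck => (Cmul C1 (fst ck), (snd ck * S m)%nat)) l)). split.
    { apply approx_Wsum; auto. intros ck Hc. apply in_map_iff in Hc. destruct Hc as [x [<- Hx]]. simpl.
      specialize (Hl x Hx). nia. }
    intros z Hz. rewrite Wsum_sub. replace (Cmul C1 (Wsum l (Defs.Cpow z (S m)))) with (Wsum l (Defs.Cpow z (S m))) by ring.
    apply H. rewrite Cnorm_pow. pose proof (Cnorm_ge0 z). eapply Rle_trans; [|exact Hz].
    rewrite <- (pow_1 (Cnorm z)) at 2. apply pow_le_pow_small; [lra|lia].
Qed.

Lemma approx_poly r (a : nat -> Cplx) : 0 <= r < 1 -> forall N,
  approx r (fun z => Cmul (Csub C1 z) (Csum (fun n => Cmul (a n) (Defs.Cpow z n)) N)).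
Proof.
  intros Hr. assert (Hm : forall n, approx r (fun z => Cmul (Csub C1 z) (Cmul (a n) (Defs.Cpow z n)))).
  { intro n. eapply approx_ext.
    apply (approx_add r (fun z => Cmul (a n) (Defs.Cpow z n)) (fun z => Cmul (Defs.Copp (a n)) (Defs.Cpow z (S n)))).
    apply approx_scale, approx_pow; auto. apply approx_scale, approx_pow; auto.
    intros z _. simpl. ring. }
  induction N.
  - simpl. apply Hm.
  - simpl. eapply approx_ext. apply (approx_add _ _ _ IHN (Hm (S N))). intros z _. simpl. ring.
Qed.

Lemma arch_inv d : 0 < d -> exists N : nat, forall n, (N <= n)%nat -> / INR (n + 1) < d.
Proof.
  intro Hd. destruct (archimed (/ d)) as [H1 H2].
  assert (0 < / d) by (apply Rinv_0_lt_compat; auto).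
  exists (Z.to_nat (up (/ d))). intros n Hn.
  assert (INR (Z.to_nat (up (/ d))) = IZR (up (/ d))).
  { rewrite INR_IZR_INZ. rewrite Z2Nat.id. auto. apply le_IZR. lra. }
  assert (INR (Z.to_nat (up (/ d))) <= INR n) by (apply le_INR; auto).
  rewrite plus_INR. simpl INR.
  assert (/ d < INR n + 1) by lra.
  rewrite <- (Rinv_inv d). apply Rinv_lt_contravar. apply Rmult_lt_0_compat; lra. auto.
Qed.

Lemma coef_bounded (a : nat -> Cplx) s : infinite_sum (fun n => Rsqr (Cnorm (a n))) s ->
  forall n, Cnorm (a n) <= 1 + s.
Proof.
  intros Hs n. set (f := fun n => Rsqr (Cnorm (a n))) in *.
  assert (Hf0 : forall m, 0 <= f m) by (intro; apply Rle_0_sqr).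
  assert (Hmono : forall m k, sum_f_R0 f m <= sum_f_R0 f (m + k)).
  { intros m k. induction k. rewrite Nat.add_0_r; lra. rewrite Nat.add_succ_r. simpl. specialize (Hf0 (S (m+k))). lra. }
  assert (Hterm : f n <= sum_f_R0 f n).
  { destruct n. simpl; lra. simpl. assert (forall m, 0 <= sum_f_R0 f m).
    { induction m; simpl. apply Hf0. specialize (Hf0 (S m)). lra. } specialize (H n). lra. }
  assert (Hle : sum_f_R0 f n <= s).
  { apply Rnot_lt_le. intro Hc. destruct (Hs (sum_f_R0 f n - s) ltac:(lra)) as [N HN].
    specialize (HN (n + N)%nat ltac:(lia)). unfold Rdist in HN. specialize (Hmono n N).
    apply Rabs_def2 in HN. lra. }
  assert (Hfs : f n <= s) by lra. unfold f, Rsqr in Hfs. pose proof (Cnorm_ge0 (a n)). assert (Cnorm (a n) <= 1 + Cnorm (a n) * Cnorm (a n)) by nra. lra.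
Qed.

Lemma Csum_S f n : Csum f (S n) = Cadd (Csum f n) (f (S n)).
Proof. reflexivity. Qed.

Lemma Csum_tail (a : nat -> Cplx) M r z N : 0 <= r < 1 -> Cnorm z <= r -> (forall n, Cnorm (a n) <= M) ->
  forall k, Cnorm (Csub (Csum (fun n => Cmul (a n) (Defs.Cpow z n)) (N + k)) (Csum (fun n => Cmul (a n) (Defs.Cpow z n)) N))
    <= M * (r ^ S N - r ^ S (N + k)) / (1 - r).
Proof.
  intros Hr Hz HM k. induction k.
  - rewrite Nat.add_0_r. replace (Csub _ _) with C0 by ring. rewrite Cnorm_C0.
    replace (r ^ S N - r ^ S N) with 0 by ring. unfold Rdiv; lra.
  - rewrite Nat.add_succ_r, Csum_S.
    set (X := Csum (fun n => Cmul (a n) (Defs.Cpow z n)) (N + k)) in *.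
    set (Y := Csum (fun n => Cmul (a n) (Defs.Cpow z n)) N) in *.
    replace (Csub (Cadd X (Cmul (a (S (N + k))) (Defs.Cpow z (S (N + k))))) Y)
      with (Cadd (Csub X Y) (Cmul (a (S (N + k))) (Defs.Cpow z (S (N + k))))) by ring.
    eapply Rle_trans. apply Cnorm_add. rewrite Cnorm_mul, Cnorm_pow.
    pose proof (Cnorm_ge0 z). pose proof (Cnorm_ge0 (a (S (N+k)))). specialize (HM (S (N+k))).
    assert (Cnorm z ^ S (N + k) <= r ^ S (N + k)) by (apply pow_incr; lra).
    assert (0 <= Cnorm z ^ S (N + k)) by (apply pow_le; lra).
    assert (Cnorm (a (S (N + k))) * Cnorm z ^ S (N + k) <= M * r ^ S (N + k)) by nra.
    assert (M * r ^ S (N + k) = M * (r ^ S (N + k) - r ^ S (S (N + k))) / (1 - r)) by (simpl; field; lra).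
    assert (M * (r ^ S N - r ^ S (N + k)) / (1 - r) + M * (r ^ S (N + k) - r ^ S (S (N + k))) / (1 - r)
      = M * (r ^ S N - r ^ S (S (N + k))) / (1 - r)) by (field; lra).
    lra.
Qed.

Lemma H2_tail (a : nat -> Cplx) (f : Cplx -> Cplx) M r : 0 <= r < 1 -> 0 <= M ->
  (forall n, Cnorm (a n) <= M) ->
  (forall z, in_disk z -> Cseries_cv (fun n => Cmul (a n) (Defs.Cpow z n)) (f z)) ->
  forall N z, Cnorm z <= r ->
  Cnorm (Csub (f z) (Csum (fun n => Cmul (a n) (Defs.Cpow z n)) N)) <= M * r ^ S N / (1 - r).
Proof.
  intros Hr HM0 HM Hf N z Hz. apply Rle_plus_epsilon. intros eta He.
  destruct (Hf z ltac:(unfold in_disk; lra) eta He) as [N1 HN1].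
  specialize (HN1 (N + N1)%nat ltac:(lia)).
  pose proof (Csum_tail a M r z N Hr Hz HM N1).
  eapply Rle_trans. apply (Cnorm_tri3 _ (Csum (fun n => Cmul (a n) (Defs.Cpow z n)) (N + N1))).
  rewrite Cnorm_sub_sym in HN1.
  assert (0 <= r ^ S (N + N1)) by (apply pow_le; lra).
  assert (M * (r ^ S N - r ^ S (N + N1)) / (1 - r) <= M * r ^ S N / (1 - r)).
  { unfold Rdiv. apply Rmult_le_compat_r. apply Rlt_le, Rinv_0_lt_compat; lra. nra. }
  lra.
Qed.

Lemma approx_f (a : nat -> Cplx) (f : Cplx -> Cplx) s r : 0 <= r < 1 ->
  infinite_sum (fun n => Rsqr (Cnorm (a n))) s ->
  (forall z, in_disk z -> Cseries_cv (fun n => Cmul (a n) (Defs.Cpow z n)) (f z)) ->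
  approx r (fun z => Cmul (Csub C1 z) (f z)).
Proof.
  intros Hr Hs Hf. set (M := 1 + s).
  assert (HM : forall n, Cnorm (a n) <= M) by (apply coef_bounded; auto).
  assert (HM0 : 0 <= M) by (pose proof (HM O); pose proof (Cnorm_ge0 (a O)); lra).
  apply approx_lim. intros eps He.
  destruct (pow_small r (eps * (1 - r) / (2 * (M + 1))) Hr) as [N HN].
  { apply Rdiv_lt_0_compat; nra. }
  exists (fun z => Cmul (Csub C1 z) (Csum (fun n => Cmul (a n) (Defs.Cpow z n)) N)). split.
  apply approx_poly; auto.
  intros z Hz. set (T := Csum (fun n => Cmul (a n) (Defs.Cpow z n)) N).
  replace (Csub (Cmul (Csub C1 z) T) (Cmul (Csub C1 z) (f z))) with (Cmul (Csub C1 z) (Defs.Copp (Csub (f z) T))) by ring.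
  rewrite Cnorm_mul, Cnorm_opp.
  pose proof (H2_tail a f M r Hr HM0 HM Hf N z Hz). fold T in H.
  pose proof (Cnorm_sub C1 z). rewrite Cnorm_C1 in H0.
  pose proof (Cnorm_ge0 (Csub C1 z)). pose proof (Cnorm_ge0 (Csub (f z) T)).
  assert (Cnorm (Csub C1 z) <= 2) by lra.
  assert (r ^ S N <= eps * (1 - r) / (2 * (M + 1))) by (apply HN; lia).
  assert (M * r ^ S N / (1 - r) <= eps / 2).
  { assert (0 <= r ^ S N) by (apply pow_le; lra).
    apply (Rmult_le_reg_r (1 - r)). lra. unfold Rdiv. rewrite Rmult_assoc, Rinv_l by lra.
    assert (r ^ S N * (2 * (M + 1)) <= eps * (1 - r)).
    { apply (Rmult_le_reg_r (/ (2 * (M+1)))). apply Rinv_0_lt_compat; lra.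
      rewrite Rmult_assoc, Rinv_r by lra. lra. }
    nra. }
  nra.
Qed.

Lemma phi_ge (phi : nat -> nat) : (forall n, (phi n < phi (S n))%nat) -> forall n, (n <= phi n)%nat.
Proof. intros H n. induction n. lia. specialize (H n). lia. Qed.

Lemma compact_radius (K : Cplx -> Prop) : (forall z, K z -> in_disk z) -> seq_compact K ->
  exists r, 0 <= r < 1 /\ forall z, K z -> Cnorm z <= r.
Proof.
  intros HK Hc. apply NNPP. intro Hno.
  assert (Hex : forall n : nat, exists z, K z /\ 1 - / INR (n + 1) < Cnorm z).
  { intro n. apply NNPP. intro Hn. apply Hno. exists (1 - / INR (n + 1)).
    assert (1 <= INR (n + 1)) by (apply (le_INR 1); lia).
    assert (0 < / INR (n+1) <= 1). { split. apply Rinv_0_lt_compat; lra. rewrite <- Rinv_1. apply Rinv_le_contravar; lra. }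
    split. lra. intros z Hz. apply Rnot_lt_le. intro. apply Hn. exists z; auto. }
  set (u := fun n => proj1_sig (constructive_indefinite_description _ (Hex n))).
  assert (Hu : forall n, K (u n) /\ 1 - / INR (n + 1) < Cnorm (u n)).
  { intro n. unfold u. destruct (constructive_indefinite_description _ (Hex n)). auto. }
  destruct (Hc u (fun n => proj1 (Hu n))) as [phi [Hphi [l [Kl Hl]]]].
  pose proof (HK l Kl) as Hld. unfold in_disk in Hld.
  set (d := (1 - Cnorm l) / 2).
  destruct (arch_inv d ltac:(unfold d; lra)) as [N1 HN1].
  destruct (Hl d ltac:(unfold d; lra)) as [N2 HN2].
  set (n := (N1 + N2)%nat).
  specialize (HN2 n ltac:(unfold n; lia)).
  pose proof (phi_ge phi Hphi n). specialize (HN1 (phi n) ltac:(unfold n in *; lia)).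
  destruct (Hu (phi n)) as [_ Hb].
  pose proof (Cnorm_tri3 (u (phi n)) l C0).
  replace (Csub (u (phi n)) C0) with (u (phi n)) in H0 by ring.
  replace (Csub l C0) with l in H0 by ring. unfold d in *. lra.
Qed.

(* conversion of a list combination into the Csum format *)
Fixpoint cf (l : list (Cplx * nat)) (k : nat) : Cplx :=
  match l with [] => C0 | ck :: l' => Cadd (if Nat.eqb (snd ck) k then fst ck else C0) (cf l' k) end.
Fixpoint nm (l : list (Cplx * nat)) : nat :=
  match l with [] => O | ck :: l' => Nat.max (snd ck) (nm l') end.

Lemma Csum_add f1 f2 n : Csum (fun i => Cadd (f1 i) (f2 i)) n = Cadd (Csum f1 n) (Csum f2 n).
Proof. induction n; simpl. auto. rewrite IHn. ring. Qed.
Lemma Csum_ext f1 f2 n : (forall i, f1 i = f2 i) -> Csum f1 n = Csum f2 n.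
Proof. intro H. induction n; simpl; rewrite ?IHn, ?H; auto. Qed.

Lemma Csum_ind_zero (H : nat -> Cplx) k c n : (n + 2 < k)%nat ->
  Csum (fun i => Cmul (if Nat.eqb k (i + 2) then c else C0) (H (i + 2)%nat)) n = C0.
Proof. induction n; intro Hk; simpl.
  - replace (Nat.eqb k 2) with false by (symmetry; apply Nat.eqb_neq; lia). ring.
  - rewrite IHn by lia. replace (Nat.eqb k (S (n + 2))) with false by (symmetry; apply Nat.eqb_neq; lia). ring.
Qed.

Lemma Csum_ind (H : nat -> Cplx) k c n : (2 <= k <= n + 2)%nat ->
  Csum (fun i => Cmul (if Nat.eqb k (i + 2) then c else C0) (H (i + 2)%nat)) n = Cmul c (H k).
Proof. induction n; intro Hk; simpl.
  - replace k with 2%nat by lia. rewrite Nat.eqb_refl. auto.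
  - destruct (Nat.eq_dec k (S n + 2)) as [E|E].
    + rewrite Csum_ind_zero by lia. rewrite E. simpl. rewrite Nat.eqb_refl. ring.
    + rewrite IHn by lia. replace (Nat.eqb k (S (n + 2))) with false by (symmetry; apply Nat.eqb_neq; lia). ring.
Qed.

Fixpoint Hsum (l : list (Cplx * nat)) (H : nat -> Cplx) : Cplx :=
  match l with [] => C0 | ck :: l' => Cadd (Cmul (fst ck) (H (snd ck))) (Hsum l' H) end.

Lemma conv (l : list (Cplx * nat)) (H : nat -> Cplx) : Vok l -> forall n, (nm l <= n + 2)%nat ->
  Csum (fun i => Cmul (cf l (i + 2)) (H (i + 2)%nat)) n = Hsum l H.
Proof.
  induction l; intros V n Hn; simpl.
  - clear. induction n; simpl. ring. rewrite IHn. ring.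
  - simpl in Hn. rewrite (Csum_ext _ (fun i => Cadd (Cmul (if Nat.eqb (snd a) (i + 2) then fst a else C0) (H (i+2)%nat))
        (Cmul (cf l (i + 2)) (H (i+2)%nat)))).
    2:{ intro i. ring. }
    rewrite Csum_add. rewrite Csum_ind. rewrite IHl. auto.
    intros ck Hck. apply V. simpl; auto. lia.
    pose proof (V a ltac:(simpl; auto)). lia.
Qed.

Lemma Hsum_h (l : list (Cplx * nat)) z : Hsum l (fun k => h k z) = Defs.Cdiv (Vsum l z) (Csub C1 z).
Proof. induction l; simpl. unfold Defs.Cdiv. ring. rewrite IHl. rewrite h_g. unfold Defs.Cdiv. ring. Qed.

Theorem mainTheorem10 :
  forall f : Cplx -> Cplx, in_H2 f ->
    exists (n : nat -> nat) (c : nat -> nat -> Cplx),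
      cv_compact_open
        (fun j z => Csum (fun i => Cmul (c j (i + 2)%nat) (h (i + 2)%nat z)) (n j))
        f.
Proof.
  intros f [a [[s Hs] Hf]].
  set (rj := fun j : nat => 1 - / INR (j + 2)).
  set (ej := fun j : nat => / INR (j + 1)).
  assert (Hrj : forall j, 0 <= rj j < 1).
  { intro j. unfold rj. assert (2 <= INR (j + 2)) by (apply (le_INR 2); lia).
    assert (0 < / INR (j + 2) <= / 2). { split. apply Rinv_0_lt_compat; lra. apply Rinv_le_contravar; lra. }
    lra. }
  assert (Hej : forall j, 0 < ej j) by (intro j; unfold ej; apply Rinv_0_lt_compat, lt_0_INR; lia).
  assert (Happ : forall j, exists l, Vok l /\ forall z, Cnorm z <= rj j ->
     Cnorm (Csub (Vsum l z) (Cmul (Csub C1 z) (f z))) <= ej j * (1 - rj j)).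
  { intro j. apply (approx_f a f s (rj j) (Hrj j) Hs Hf). specialize (Hrj j). specialize (Hej j). nra. }
  set (Lf := fun j => proj1_sig (constructive_indefinite_description _ (Happ j))).
  assert (HL : forall j, Vok (Lf j) /\ forall z, Cnorm z <= rj j ->
     Cnorm (Csub (Vsum (Lf j) z) (Cmul (Csub C1 z) (f z))) <= ej j * (1 - rj j)).
  { intro j. unfold Lf. destruct (constructive_indefinite_description _ (Happ j)). auto. }
  exists (fun j => nm (Lf j)), (fun j => cf (Lf j)).
  intros K HK Hc eps Heps.
  destruct (compact_radius K HK Hc) as [r [Hr HKr]].
  destruct (arch_inv (Rmin eps (1 - r))) as [N HN]. apply Rmin_pos; lra.
  exists N. intros j Hj z Kz.
  destruct (HL j) as [HV Hb].
  rewrite (conv (Lf j) (fun k => h k z) HV (nm (Lf j)) ltac:(lia)).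
  rewrite Hsum_h.
  specialize (HN j Hj). pose proof (Rmin_l eps (1 - r)). pose proof (Rmin_r eps (1 - r)).
  assert (HjI : / INR (j + 2) <= / INR (j + 1)).
  { apply Rinv_le_contravar. apply lt_0_INR; lia. apply le_INR; lia. }
  assert (Hzr : Cnorm z <= rj j). { pose proof (HKr z Kz). unfold rj. lra. }
  specialize (Hb z Hzr). pose proof (Hrj j).
  set (D := Csub C1 z) in *. set (V := Vsum (Lf j) z) in *.
  assert (HD : 1 - rj j <= Cnorm D) by (pose proof (Cnorm_1sub z); unfold D; lra).
  assert (HDnz : D <> C0). { intro E. rewrite E, Cnorm_C0 in HD. lra. }
  replace (Csub (Defs.Cdiv V D) (f z)) with (Cmul (Csub V (Cmul D (f z))) (Defs.Cinv D)) by (field; auto).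
  rewrite Cnorm_mul, Cnorm_inv by (intro E; lra).
  pose proof (Cnorm_ge0 (Csub V (Cmul D (f z)))).
  assert (/ Cnorm D <= / (1 - rj j)) by (apply Rinv_le_contravar; lra).
  assert (Hfin : Cnorm (Csub V (Cmul D (f z))) * / Cnorm D <= ej j * (1 - rj j) * / (1 - rj j)).
  { apply Rmult_le_compat; auto. apply Rlt_le, Rinv_0_lt_compat; lra. }
  rewrite Rmult_assoc, Rinv_r in Hfin by lra. unfold ej in Hfin. lra.
Qed.
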